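(* Consider the production planning setting described in the context, in the non-overlapping case, with the discrete budgeted scenario set $\mathcal{U}^d$ (budget $\Gamma^d\in\{0,1,\dots,T\}$). Fix a production plan $\pmb{x}\in\mathbb{X}$ with cumulative productions $X_t=\sum_{i\in[t]}x_i$. Then the optimal value of the adversarial problem $\max_{\pmb{D}\in\mathcal{U}^d}\sum_{t\in[T]}\max\{f_I(X_t,D_t),f_B(X_t,D_t)\}$ equals the optimal value of $$\max\ \sum_{t\in[T]}\max\{f_I(X_t,\widehat{D}_t-\delta_t\Delta_t),\,f_B(X_t,\widehat{D}_t+\delta_t\Delta_t)\}\quad\text{s.t.}\quad \sum_{t\in[T]}\delta_t\le\Gamma^d,\ \ 0\le\delta_t\le 1\ (t\in[T]).$$ Moreover, this latter problem has an integral optimal solution $\pmb{\delta}^*\in\{0,1\}^T$ with $\sum_{t\in[T]}\delta^*_t=\Gamma^d$.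
   Context: There are $T\ge 1$ periods, $[T]=\{1,\dots,T\}$. Given are a production cost $c^P$, an inventory cost $c^I$, a backordering cost $c^B$ and a selling price $b^P$ (independent of the period), and a set $\mathbb{X}\subseteq\mathbb{R}^T_+$ of feasible production plans $\pmb{x}=(x_1,\dots,x_T)$ described by finitely many linear constraints. For a plan write $X_t=\sum_{i\in[t]}x_i$. For $t\in[T-1]$ let $f_I(X_t,D_t)=c^I(X_t-D_t)$ and $f_B(X_t,D_t)=c^B(D_t-X_t)$; for $t=T$ let $f_I(X_T,D_T)=c^I(X_T-D_T)+c^PX_T-b^PD_T$ and $f_B(X_T,D_T)=c^B(D_T-X_T)+c^PX_T-b^PX_T$. Nominal cumulative demands $\widehat{D}_t\ge 0$ satisfy $\widehat{D}_t\le\widehat{D}_{t+1}$, and deviations satisfy $0\le\Delta_t\le\widehat{D}_t$. The discrete budgeted scenario set is $\mathcal{U}^d=\{\pmb{D}\in\mathbb{R}^T: D_t\le D_{t+1}\ (t\in[T-1]),\ D_t\in[\widehat{D}_t-\Delta_t,\widehat{D}_t+\Delta_t]\ (t\in[T]),\ |\{t: D_t\ne\widehat{D}_t\}|\le\Gamma^d\}$ with integer $\Gamma^d\in\{0,\dots,T\}$. The non-overlapping case means $\widehat{D}_t+\Delta_t\le\widehat{D}_{t+1}-\Delta_{t+1}$ for all $t\in[T-1]$. *)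

(* Defs.v *)
(* Periods are 1-based: t = 1..T; functions nat -> R whose
   values outside [1,T] are irrelevant. *)
From HB Require Import structures.
From mathcomp Require Import all_boot all_order all_algebra.
Set Implicit Arguments. Unset Strict Implicit. Unset Printing Implicit Defensive.
Import Order.TTheory GRing.Theory Num.Theory.
Local Open Scope ring_scope.

Section Defs.
Variable R : realFieldType.

Definition cumprod (x : nat -> R) (t : nat) : R := \sum_(1 <= i < t.+1) x i.

Definition fI (T : nat) (cP cI bP : R) (t : nat) (X D : R) : R :=
  if t == T then cI * (X - D) + cP * X - bP * D else cI * (X - D).

Definition fB (T : nat) (cP cB bP : R) (t : nat) (X D : R) : R :=
  if t == T then cB * (D - X) + cP * X - bP * X else cB * (D - X).

Definition adv_obj (T : nat) (cP cI cB bP : R) (x D : nat -> R) : R :=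
  \sum_(1 <= t < T.+1)
     Num.max (fI T cP cI bP t (cumprod x t) (D t))
             (fB T cP cB bP t (cumprod x t) (D t)).

Definition relax_obj (T : nat) (cP cI cB bP : R) (x Dhat Delta delta : nat -> R) : R :=
  \sum_(1 <= t < T.+1)
     Num.max (fI T cP cI bP t (cumprod x t) (Dhat t - delta t * Delta t))
             (fB T cP cB bP t (cumprod x t) (Dhat t + delta t * Delta t)).

Definition in_Ud (T : nat) (Dhat Delta : nat -> R) (Gamma : nat) (D : nat -> R) : Prop :=
  [/\ (forall t, (1 <= t < T)%N -> D t <= D t.+1),
      (forall t, (1 <= t <= T)%N -> Dhat t - Delta t <= D t <= Dhat t + Delta t)
    & (count (fun t => D t != Dhat t) (iota 1 T) <= Gamma)%N].

Definition relax_feas (T : nat) (Gamma : nat) (delta : nat -> R) : Prop :=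
  \sum_(1 <= t < T.+1) delta t <= Gamma%:R /\
  (forall t, (1 <= t <= T)%N -> 0 <= delta t <= 1).

Definition in_plans (T m : nat) (A : 'I_m -> nat -> R) (b : 'I_m -> R) (x : nat -> R) : Prop :=
  (forall t, (1 <= t <= T)%N -> 0 <= x t) /\
  (forall k : 'I_m, \sum_(1 <= t < T.+1) A k t * x t <= b k).

End Defs.

(* Main.v *)
Require Import Defs.
From HB Require Import structures.
From mathcomp Require Import all_boot all_order all_algebra.
From mathcomp Require Import ring lra.
Import Order.TTheory GRing.Theory Num.Theory.
Local Open Scope ring_scope.

Lemma maxconv (R : realFieldType) (p q u v d : R) : 0 <= d <= 1 ->
  Num.max (p + d * u) (q + d * v) <=
  Num.max p q + d * (Num.max (p + u) (q + v) - Num.max p q).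
Proof.
move=> /andP[d0 d1].
have hp : p <= Num.max p q by rewrite le_max lexx.
have hq : q <= Num.max p q by rewrite le_max lexx orbT.
have hpu : p + u <= Num.max (p + u) (q + v) by rewrite le_max lexx.
have hqv : q + v <= Num.max (p + u) (q + v) by rewrite le_max lexx orbT.
set M0 := Num.max p q in hp hq *; set M1 := Num.max (p + u) (q + v) in hpu hqv *.
rewrite ge_max; apply/andP; split.
- have h1 : 0 <= (1 - d) * (M0 - p) by apply: mulr_ge0; lra.
  have h2 : 0 <= d * (M1 - (p + u)) by apply: mulr_ge0; lra.
  nra.
- have h1 : 0 <= (1 - d) * (M0 - q) by apply: mulr_ge0; lra.
  have h2 : 0 <= d * (M1 - (q + v)) by apply: mulr_ge0; lra.
  nra.
Qed.

Lemma count_sumR (R : realFieldType) (T : Type) (p : pred T) (s : seq T) :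
  (count p s)%:R = \sum_(t <- s) (if p t then 1 else 0) :> R.
Proof.
elim: s => [|y s IH]; first by rewrite big_nil.
by rewrite big_cons /= natrD IH; case: (p y) => //=; rewrite add0r.
Qed.

Lemma sumT (R : realFieldType) (T : nat) (F : nat -> R) :
  \sum_(1 <= t < T.+1) F t = \sum_(i < T) F i.+1.
Proof. by rewrite big_add1 /= big_mkord. Qed.

Lemma range_ord (T t : nat) : (1 <= t <= T)%N -> exists i : 'I_T, t = i.+1.
Proof.
case: t => // t /andP[_ h]. by exists (Ordinal h).
Qed.

Lemma top_set (R : realFieldType) (T G : nat) (a : 'I_T -> R) :
  (G <= T)%N -> (forall i, 0 <= a i) ->
  exists S : {set 'I_T}, exists th : R,
    [/\ #|S| = G, 0 <= th, (forall i, i \in S -> th <= a i)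
      & (forall i, i \notin S -> a i <= th)].
Proof.
move=> hG a0.
pose S0 := widen_ord hG @: [set: 'I_G].
have cS0 : #|S0| = G.
  by rewrite card_imset ?cardsT ?card_ord //; by move=> x y /(congr1 val) /= /val_inj.
pose F (S : {set 'I_T}) := \sum_(i in S) a i.
pose P := (fun S : {set 'I_T} => #|S| == G).
have PS0 : P S0 by rewrite /P cS0.
case: (@arg_maxP _ R _ S0 P F PS0) => S PS Smax.
have swap : forall i j, i \in S -> j \notin S -> a j <= a i.
  move=> i j iS jS.
  have jS' : j \notin S :\ i.
    by rewrite in_setD1 negb_and jS orbT.
  have PS' : P (j |: (S :\ i)).
    rewrite /P cardsU1 jS' /=. move/eqP: PS => <-.
    by rewrite (cardsD1 i S) iS add1n.
  have := Smax _ PS'. rewrite /F big_setU1 //= (big_setD1 i iS) /=.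
  lra.
pose th := \big[Num.max/0]_(j in ~: S) a j.
exists S, th; split.
- exact/eqP.
- rewrite /th; elim/big_ind: _ => //= x y hx hy. by rewrite le_max hx.
- move=> i iS; rewrite /th; elim/big_ind: _ => //= [x y hx hy|j].
    by rewrite ge_max hx hy.
  rewrite in_setC => jS; exact: swap.
- move=> i iS; rewrite /th (bigD1 i) /= ?in_setC //. by rewrite le_max lexx.
Qed.
Theorem lemma1 (R : realFieldType) (T : nat) (cP cI cB bP : R)
  (m : nat) (A : 'I_m -> nat -> R) (b : 'I_m -> R)
  (Dhat Delta : nat -> R) (Gamma : nat) (x : nat -> R) :
  (0 < T)%N ->
  0 <= cP -> 0 <= cI -> 0 <= cB -> 0 <= bP ->
  (forall t, (1 <= t <= T)%N -> 0 <= Dhat t) ->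
  (forall t, (1 <= t < T)%N -> Dhat t <= Dhat t.+1) ->
  (forall t, (1 <= t <= T)%N -> 0 <= Delta t <= Dhat t) ->
  (forall t, (1 <= t < T)%N -> Dhat t + Delta t <= Dhat t.+1 - Delta t.+1) ->
  (Gamma <= T)%N ->
  in_plans T A b x ->
  exists delta : nat -> R,
    [/\ relax_feas T Gamma delta,
        (forall d, relax_feas T Gamma d ->
           relax_obj T cP cI cB bP x Dhat Delta d
             <= relax_obj T cP cI cB bP x Dhat Delta delta),
        (forall t, (1 <= t <= T)%N -> delta t = 0 \/ delta t = 1),
        \sum_(1 <= t < T.+1) delta t = Gamma%:R
      & exists D : nat -> R,
          [/\ in_Ud T Dhat Delta Gamma D,
              adv_obj T cP cI cB bP x D
                = relax_obj T cP cI cB bP x Dhat Delta delta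
            & forall D', in_Ud T Dhat Delta Gamma D' ->
                adv_obj T cP cI cB bP x D'
                  <= relax_obj T cP cI cB bP x Dhat Delta delta]].
Proof.
move=> T0 cP0 cI0 cB0 bP0 Dh0 Dhmono Dbd nonover hG plans.
pose FI t D := fI T cP cI bP t (cumprod x t) D.
pose FB t D := fB T cP cB bP t (cumprod x t) D.
have FI_anti : forall t D1 D2, D1 <= D2 -> FI t D2 <= FI t D1.
  move=> t D1 D2 h; rewrite /FI /fI; case: ifP => _; nra.
have FB_mono : forall t D1 D2, D1 <= D2 -> FB t D1 <= FB t D2.
  move=> t D1 D2 h; rewrite /FB /fB; case: ifP => _; nra.
pose g t d := Num.max (FI t (Dhat t - d * Delta t)) (FB t (Dhat t + d * Delta t)).
pose a t := g t 1 - g t 0.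
have gconv : forall t d, 0 <= d <= 1 -> g t d <= g t 0 + d * a t.
  move=> t d hd.
  have eI : forall e, FI t (Dhat t - e * Delta t) =
      FI t (Dhat t) + e * (FI t (Dhat t - Delta t) - FI t (Dhat t)).
    by move=> e; rewrite /FI /fI; case: ifP => _; ring.
  have eB : forall e, FB t (Dhat t + e * Delta t) =
      FB t (Dhat t) + e * (FB t (Dhat t + Delta t) - FB t (Dhat t)).
    by move=> e; rewrite /FB /fB; case: ifP => _; ring.
  rewrite /a /g !eI !eB !mul0r !mul1r !addr0; exact: maxconv.
have a0 : forall t, (1 <= t <= T)%N -> 0 <= a t.
  move=> t ht; have /andP[D0 _] := Dbd t ht.
  rewrite /a /g !mul1r !mul0r subr0 addr0 subr_ge0 ge_max; apply/andP; split.
    by rewrite le_max FI_anti // lerBlDr lerDl.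
  by rewrite le_max FB_mono ?orbT // lerDl.
have [S [th [cS th0 thS thnS]]] :=
  @top_set R T Gamma (fun i : 'I_T => a i.+1) hG (fun i => a0 i.+1 (ltn_ord i)).
pose cond t := [exists i : 'I_T, (i \in S) && (val i == t.-1)] && (0 < t)%N.
have condE : forall i : 'I_T, cond i.+1 = (i \in S).
  move=> i; rewrite /cond andbT; apply/existsP/idP => [[j /andP[jS /eqP hj]]|iS].
    by have -> : i = j by apply: val_inj; rewrite /= hj.
  by exists i; rewrite iS eqxx.
have condP : forall t, (1 <= t <= T)%N ->
    (cond t -> th <= a t) /\ (~~ cond t -> a t <= th).
  move=> t /range_ord [i ->]; rewrite condE; split; [exact: thS | exact: thnS].
pose ds t : R := if cond t then 1 else 0.
have sumds : \sum_(1 <= t < T.+1) ds t = Gamma%:R.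
  rewrite sumT; under eq_bigr do rewrite /ds condE.
  by rewrite -big_mkcond sumr_const cS.
have feas : relax_feas T Gamma ds.
  split; first by rewrite sumds.
  by move=> t _; rewrite /ds; case: (cond t); rewrite ?lexx ?ler01.
have opt : forall d, relax_feas T Gamma d ->
    relax_obj T cP cI cB bP x Dhat Delta d <= relax_obj T cP cI cB bP x Dhat Delta ds.
  move=> d [dsum dbd].
  have pt : forall t, (1 <= t < T.+1)%N -> g t (d t) <= g t (ds t) + th * (d t - ds t).
    move=> t ht; have := gconv t (d t) (dbd t ht).
    have /andP[d0 d1] := dbd t ht.
    have [c1 c2] := condP t ht.
    rewrite /ds; case: (cond t) c1 c2 => [c1 _|_ c2].
    - have c := c1 erefl.
      have h : 0 <= (1 - d t) * (a t - th) by apply: mulr_ge0; lra.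
      rewrite /a in c h *; nra.
    - have c := c2 erefl.
      have h : 0 <= d t * (th - a t) by apply: mulr_ge0; lra.
      nra.
  apply: le_trans (ler_sum_nat pt) _.
  rewrite big_split /= -mulr_sumr sumrB sumds.
  have : th * (\sum_(1 <= i < T.+1) d i - Gamma%:R) <= 0.
    by apply: mulr_ge0_le0 => //; lra.
  rewrite /relax_obj -/FI -/FB; lra.
have iE : index_iota 1 T.+1 = iota 1 T by rewrite /index_iota subSS subn0.
have cntR : forall D' : nat -> R,
    (count (fun t => D' t != Dhat t) (iota 1 T))%:R =
    \sum_(1 <= t < T.+1) (if D' t != Dhat t then 1 else 0) :> R.
  by move=> D'; rewrite count_sumR -iE.
pose Dst t := if cond t then
    (if FB t (Dhat t + Delta t) <= FI t (Dhat t - Delta t)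
     then Dhat t - Delta t else Dhat t + Delta t) else Dhat t.
have Dstb : forall t, (1 <= t <= T)%N -> Dhat t - Delta t <= Dst t <= Dhat t + Delta t.
  move=> t ht; have /andP[D0 _] := Dbd t ht.
  rewrite /Dst; case: (cond t); last (apply/andP; split; lra).
  case: ifP => _; apply/andP; split; lra.
have Dst_in : in_Ud T Dhat Delta Gamma Dst.
  split.
  - move=> t /andP[t1 tT].
    have h1 : (1 <= t <= T)%N by rewrite t1 ltnW.
    have h2 : (1 <= t.+1 <= T)%N by rewrite tT andbT.
    have /andP[_ u1] := Dstb t h1. have /andP[l2 _] := Dstb t.+1 h2.
    have := nonover t (introT andP (conj t1 tT)); lra.
  - exact: Dstb.
  - rewrite -(ler_nat R) cntR -sumds; apply: ler_sum_nat => t _.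
    rewrite /ds /Dst; case: (cond t); first by case: ifP.
    by rewrite eqxx lexx.
exists ds; split => //.
- by move=> t _; rewrite /ds; case: (cond t); [right|left].
exists Dst; split => //.
- apply: eq_big_nat => t ht.
  rewrite -/(FI t _) -/(FB t _).
  have /andP[D0 _] := Dbd t ht.
  rewrite /Dst /ds; case: (cond t); last by rewrite mul0r subr0 addr0.
  rewrite mul1r; case: ifP => hle.
  + have h3 : FB t (Dhat t - Delta t) <= FI t (Dhat t - Delta t).
      by apply: le_trans hle; apply: FB_mono; lra.
    rewrite (max_l h3); symmetry; exact: (max_l hle).
  + move/negbT: hle; rewrite -ltNge => hlt.
    have h3 : FI t (Dhat t + Delta t) <= FB t (Dhat t + Delta t).
      by apply: le_trans (ltW hlt); apply: FI_anti; lra.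
    rewrite (max_r h3); symmetry; exact: (max_r (ltW hlt)).
- move=> D' [D'm D'b D'c].
  pose dd t : R := if D' t != Dhat t then 1 else 0.
  have feas' : relax_feas T Gamma dd.
    split; first by rewrite /dd -cntR ler_nat.
    by move=> t _; rewrite /dd; case: (D' t != Dhat t); rewrite ?lexx ?ler01.
  apply: le_trans (opt _ feas').
  apply: ler_sum_nat => t ht.
  rewrite -/(FI t _) -/(FB t _) /dd.
  have /andP[lo hi] := D'b t ht.
  case: eqP => [->|_]; first by rewrite mul0r subr0 addr0.
  rewrite /= mul1r ge_max; apply/andP; split.
  + by rewrite le_max FI_anti.
  + by rewrite le_max FB_mono ?orbT.
Qed.
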